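(* Let $G$ be a finite group, and let $a_1,a_2,a_3,a_4$ be independent uniformly random elements of $G$. Then \[ Pr(a_1a_2a_3a_4=a_2a_4a_1a_3)=Pr^4(G)\quad\text{and}\quad Pr(a_1a_2a_3a_4=a_3a_1a_4a_2)=Pr^4(G), \] where $Pr^4(G)$ is the probability that $a_1a_2a_3a_4=a_4a_3a_2a_1$. *)

(* Defs.v *)
From mathcomp Require Import all_boot all_algebra all_fingroup.
Set Implicit Arguments. Unset Strict Implicit. Unset Printing Implicit Defensive.
Import GRing.Theory.
Local Open Scope group_scope.

Definition prob4 (gT : finGroupType) (G : {group gT})
  (P : gT -> gT -> gT -> gT -> bool) : rat :=
  ((#|[set t : gT * gT * gT * gT |
        [&& t.1.1.1 \in G, t.1.1.2 \in G, t.1.2 \in G, t.2 \in G &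
            P t.1.1.1 t.1.1.2 t.1.2 t.2]]|)%:R / (#|G| ^ 4)%:R)%R.

Definition Pr4 (gT : finGroupType) (G : {group gT}) : rat :=
  prob4 G (fun a1 a2 a3 a4 => a1 * a2 * a3 * a4 == a4 * a3 * a2 * a1).

(* Main.v *)
Require Import Defs.
From mathcomp Require Import all_boot all_algebra all_fingroup.
Local Open Scope group_scope.

Section Aux.
Variables (gT : finGroupType) (G : {group gT}).

Definition S4 (P : gT -> gT -> gT -> gT -> bool) :=
  [set t : gT * gT * gT * gT |
        [&& t.1.1.1 \in G, t.1.1.2 \in G, t.1.2 \in G, t.2 \in G &
            P t.1.1.1 t.1.1.2 t.1.2 t.2]].

Lemma card_transfer (P Q : gT -> gT -> gT -> gT -> bool)
  (f g : gT * gT * gT * gT -> gT * gT * gT * gT) :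
  cancel f g -> cancel g f ->
  (forall t, t \in S4 Q -> f t \in S4 P) ->
  (forall t, t \in S4 P -> g t \in S4 Q) ->
  #|S4 P| = #|S4 Q|.
Proof.
move=> fK gK hf hg.
have -> : S4 P = f @: S4 Q.
  apply/setP => t; apply/idP/imsetP.
    by move=> tP; exists (g t); [apply: hg | rewrite gK].
  by case=> s sQ ->; apply: hf.
by apply: card_imset; apply: can_inj fK.
Qed.

End Aux.
Theorem mainTheorem9 (gT : finGroupType) (G : {group gT}) :
  prob4 G (fun a1 a2 a3 a4 => a1 * a2 * a3 * a4 == a2 * a4 * a1 * a3) = Pr4 G /\
  prob4 G (fun a1 a2 a3 a4 => a1 * a2 * a3 * a4 == a3 * a1 * a4 * a2) = Pr4 G.
Proof.
rewrite /Pr4 /prob4; split; congr (_ %:R / _)%R.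
- apply: (@card_transfer gT G (fun a1 a2 a3 a4 => a1 * a2 * a3 * a4 == a2 * a4 * a1 * a3) (fun b1 b2 b3 b4 => b1 * b2 * b3 * b4 == b4 * b3 * b2 * b1)
    (fun b => (b.1.1.2 * b.1.1.1, b.1.1.2, b.1.2, b.2 * b.1.2))
    (fun a => (a.1.1.2^-1 * a.1.1.1, a.1.1.2, a.1.2, a.2 * a.1.2^-1))).
  + by case=> [[[b1 b2] b3] b4] /=; rewrite mulKg mulgK.
  + by case=> [[[b1 b2] b3] b4] /=; rewrite mulKVg mulgKV.
  + case=> [[[b1 b2] b3] b4]; rewrite !inE /= => /and5P[h1 h2 h3 h4 /eqP e].
    apply/and5P; split; rewrite ?(groupM, groupV) //; apply/eqP.
    have -> : b2 * b1 * b2 * b3 * (b4 * b3) = b2 * (b1 * b2 * b3 * b4) * b3 by rewrite !mulgA.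
    by rewrite e !mulgA.
  + case=> [[[a1 a2] a3] a4]; rewrite !inE /= => /and5P[h1 h2 h3 h4 /eqP e].
    apply/and5P; split; rewrite ?(groupM, groupV) //; apply/eqP.
    have -> : a2^-1 * a1 * a2 * a3 * (a4 * a3^-1) = a2^-1 * (a1 * a2 * a3 * a4) * a3^-1 by rewrite !mulgA.
    by rewrite e !mulgA !mulgK mulVg mul1g mulgKV.
- apply: (@card_transfer gT G (fun a1 a2 a3 a4 => a1 * a2 * a3 * a4 == a3 * a1 * a4 * a2) (fun b1 b2 b3 b4 => b1 * b2 * b3 * b4 == b4 * b3 * b2 * b1)
    (fun b => (b.2^-1 * b.1.1.1, b.1.1.2, b.1.2 * b.1.1.2 * b.2, b.2^-1))
    (fun a => (a.2^-1 * a.1.1.1, a.1.1.2, a.1.2 * a.2 * a.1.1.2^-1, a.2^-1))).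
  + by case=> [[[b1 b2] b3] b4] /=; rewrite !invgK mulKVg !mulgK.
  + by case=> [[[b1 b2] b3] b4] /=; rewrite !invgK mulKVg mulgKV mulgK.
  + case=> [[[b1 b2] b3] b4]; rewrite !inE /= => /and5P[h1 h2 h3 h4 /eqP e].
    apply/and5P; split; rewrite ?(groupM, groupV) //; apply/eqP.
    have -> : b4^-1 * b1 * b2 * (b3 * b2 * b4) * b4^-1 = b4^-1 * (b1 * b2 * b3 * b4) * b4^-1 * b2
      by rewrite !mulgA !mulgK.
    by rewrite e !mulgA mulVg mul1g mulgK.
  + case=> [[[a1 a2] a3] a4]; rewrite !inE /= => /and5P[h1 h2 h3 h4 /eqP e].
    apply/and5P; split; rewrite ?(groupM, groupV) //; apply/eqP.
    have -> : a4^-1 * a1 * a2 * (a3 * a4 * a2^-1) * a4^-1 = a4^-1 * (a1 * a2 * a3 * a4) * a2^-1 * a4^-1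
      by rewrite !mulgA.
    by rewrite e !mulgA !mulgK mulgKV mulgK.
Qed.
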